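(* Let $p\equiv1\pmod 4$ be a prime. Let $S\subset\mathbb{P}^5$ be the surface over $\mathbb{F}_p$ defined by $$x_1^2-x_2^2=x_3^2,\qquad x_0^2-x_1^2=x_4^2,\qquad x_0^2-x_2^2=x_5^2,$$ and let $X\subset\mathbb{A}^3$ be the affine surface over $\mathbb{F}_p$ given by $z^2=(x^2y^2+1)(x^2+y^2)$. Then $S$ is birationally isomorphic to $X$ over $\mathbb{F}_p$. Moreover, there is an isomorphism (of varieties over $\mathbb{F}_p$) between $S\setminus D$ and $X\setminus D_1$, where $D=S\cap\{x_1x_5=0\}$ and $D_1=X\cap\{xyz=0\}$. *)

(* Defs.v *)
From HB Require Import structures.
From mathcomp Require Import all_boot all_order all_algebra.
From mathcomp Require Import mpoly.
Set Implicit Arguments. Unset Strict Implicit. Unset Printing Implicit Defensive.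
Import Order.TTheory GRing.Theory.
Local Open Scope ring_scope.

(* Evaluation of an integer-coefficient polynomial in n variables at a point
   of K^n (coefficients sent to K through the canonical map int -> K; for K
   of characteristic p this is the same as reducing coefficients mod p, so
   these are exactly the polynomials with coefficients in F_p). *)
Definition evZ (K : nzRingType) (n : nat) (P : {mpoly int[n]}) (v : 'I_n -> K) : K :=
  mmap (fun c : int => c%:~R) v P.

Definition onXD1 (K : fieldType) (w : 'I_3 -> K) : bool :=
  let x := w (inord 0) in let y := w (inord 1) in let z := w (inord 2) in
  (z ^+ 2 == (x ^+ 2 * y ^+ 2 + 1) * (x ^+ 2 + y ^+ 2)) && (x * y * z != 0).

(* Representatives in K^6 of K-points of S \ D, S ⊂ P^5 given by
   x1^2 - x2^2 = x3^2, x0^2 - x1^2 = x4^2, x0^2 - x2^2 = x5^2,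
   D = S ∩ {x1 x5 = 0}; coordinates x_i = v i.  (x1 x5 != 0 forces v != 0.) *)
Definition onSD (K : fieldType) (v : 'I_6 -> K) : bool :=
  let x0 := v (inord 0) in let x1 := v (inord 1) in let x2 := v (inord 2) in
  let x3 := v (inord 3) in let x4 := v (inord 4) in let x5 := v (inord 5) in
  [&& x1 ^+ 2 - x2 ^+ 2 == x3 ^+ 2, x0 ^+ 2 - x1 ^+ 2 == x4 ^+ 2,
      x0 ^+ 2 - x2 ^+ 2 == x5 ^+ 2 & x1 * x5 != 0].

Definition psiMap (K : fieldType) (P : 'I_6 -> {mpoly int[3]}) (w : 'I_3 -> K)
  : 'I_6 -> K := fun i => evZ (P i) w.

Definition phiMap (K : fieldType) (Q : 'I_3 -> {mpoly int[6]}) (a b : nat)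
  (v : 'I_6 -> K) : 'I_3 -> K :=
  fun j => evZ (Q j) v / (v (inord 1) ^+ a * v (inord 5) ^+ b).

Definition scalev (K : fieldType) (n : nat) (c : K) (v : 'I_n -> K) : 'I_n -> K :=
  fun i => c * v i.

(* Main.v *)
Require Import Defs.
From HB Require Import structures.
From mathcomp Require Import all_boot all_order all_algebra.
From mathcomp Require Import mpoly.
From mathcomp Require Import ring zify.
Import Order.TTheory GRing.Theory.
Local Open Scope ring_scope.

Section E.
Variables (K : fieldType) (n : nat) (v : 'I_n -> K).
Local Notation f := (intmul (1:K) : {rmorphism int -> K}).
Lemma evZM (P Q : {mpoly int[n]}) : evZ (P * Q) v = evZ P v * evZ Q v.
Proof. exact: (rmorphM (mmap f v)). Qed.
Lemma evZD (P Q : {mpoly int[n]}) : evZ (P + Q) v = evZ P v + evZ Q v.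
Proof. exact: (rmorphD (mmap f v)). Qed.
Lemma evZB (P Q : {mpoly int[n]}) : evZ (P - Q) v = evZ P v - evZ Q v.
Proof. exact: (rmorphB (mmap f v)). Qed.
Lemma evZX (P : {mpoly int[n]}) m : evZ (P ^+ m) v = evZ P v ^+ m.
Proof. exact: (rmorphXn (mmap f v)). Qed.
Lemma evZn m : evZ (m%:R : {mpoly int[n]}) v = m%:R.
Proof. exact: (rmorph_nat (mmap f v)). Qed.
Lemma evZN (P : {mpoly int[n]}) : evZ (- P) v = - evZ P v.
Proof. exact: (rmorphN (mmap f v)). Qed.
Lemma evZ1 : evZ (1 : {mpoly int[n]}) v = 1.
Proof. exact: (rmorph1 (mmap f v)). Qed.
Lemma evZC c : evZ (c%:MP : {mpoly int[n]}) v = c%:~R.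
Proof. by rewrite /evZ mmapC. Qed.
Lemma evZV i : evZ ('X_i : {mpoly int[n]}) v = v i.
Proof. by rewrite /evZ (mmapX v f) mmap1U. Qed.
End E.

Lemma step (K : fieldType) (m j : nat) : (j <= m)%N -> (2 * m+1)%:R = 0 :> K ->
  ((m+j)`!)%:R = (-1)^+j * (m`!)%:R * (m^_j)%:R :> K.
Proof.
move=> hj hp; elim: j hj => [|j IH] hj.
  by rewrite addn0 ffactn0 expr0 mul1r mulr1.
have e : ((m+j).+1)%:R = - (m-j)%:R :> K.
  apply/eqP; rewrite -subr_eq0 opprK -natrD.
  have -> : ((m + j).+1 + (m - j) = 2 * m+1)%N by lia.
  by rewrite hp.
rewrite addnS factS natrM e IH; last by lia.
rewrite ffactnSr natrM exprS; ring.
Qed.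

Lemma sqrtm1 (K : fieldType) (k : nat) : (4 * k+1)%N \in [pchar K] ->
  (((2 * k)%N`!)%:R : K)^+2 = -1.
Proof.
move=> hc.
have hpr := pcharf_prime hc.
have hp0 : (4 * k+1)%:R = 0 :> K by exact: pcharf0.
have := Wilson (p := (4 * k+1)%N). rewrite hpr => /(_ _)/esym.
have -> : (4 * k + 1).-1 = (2 * k + 2 * k)%N by lia.
move=> /(_ (prime_gt1 hpr)); rewrite (dvdn_pcharf hc) => /eqP.
rewrite -addn1 natrD => /eqP; rewrite addr_eq0 => /eqP h.
rewrite (@step K (2 * k)%N (2 * k)%N) // in h; last first.
  by rewrite -hp0; congr (_%:R); lia.
rewrite ffactnn exprM (_ : (-1)^+2 = 1 :> K) ?expr1n ?mul1r in h; last by rewrite expr2 mulrNN mulr1.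
by rewrite expr2 h.
Qed.

Definition ii (k : nat) : int := ((2 * k)%N`!)%:Z.
Definition Xv3 (t : nat) : {mpoly int[3]} := 'X_(inord t).
Definition Xv6 (t : nat) : {mpoly int[6]} := 'X_(inord t).
Definition Pm (k : nat) (j : 'I_6) : {mpoly int[3]} :=
  match nat_of_ord j with
  | 0 => Xv3 1 * (Xv3 0 ^+ 2 + 1)
  | 1 => 2 * Xv3 0 * Xv3 1
  | 2 => (ii k)%:MP * Xv3 0 * (Xv3 1 ^+ 2 - 1)
  | 3 => Xv3 0 * (Xv3 1 ^+ 2 + 1)
  | 4 => Xv3 1 * (Xv3 0 ^+ 2 - 1)
  | _ => Xv3 2 end.
Definition Qm (k : nat) (j : 'I_3) : {mpoly int[6]} :=
  match nat_of_ord j with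
  | 0 => (Xv6 0 + Xv6 4) * Xv6 1 ^+ 2
  | 1 => (Xv6 3 - (ii k)%:MP * Xv6 2) * Xv6 1 ^+ 2
  | _ => 2 * Xv6 5 * (Xv6 0 + Xv6 4) * (Xv6 3 - (ii k)%:MP * Xv6 2) end.

Lemma psiE (K : fieldType) k (w : 'I_3 -> K) (j : nat) (hj : (j < 6)%N) :
  psiMap (Pm k) w (inord j) = evZ (Pm k (inord j)) w.
Proof. by []. Qed.

Ltac evs := rewrite /Xv3 /Xv6 ?(evZB, evZn, evZM, evZX, evZD, evZN, evZ1, evZC, evZV).


Lemma alg1 (K : fieldType) (i x y z : K) : i^+2 = -1 -> (2:K) != 0 -> x*y*z != 0 ->
  z^+2 = (x^+2*y^+2+1)*(x^+2+y^+2) ->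
  ((2*x*y)^+2 - (i*x*(y^+2-1))^+2 = (x*(y^+2+1))^+2) /\
  (      (y*(x^+2+1))^+2 - (2*x*y)^+2 = (y*(x^+2-1))^+2) /\
  (      (y*(x^+2+1))^+2 - (i*x*(y^+2-1))^+2 = z^+2) /\
  (      2*x*y * z != 0) /\
  (      (y*(x^+2+1) + y*(x^+2-1)) * (2*x*y)^+2 / ((2*x*y)^+3 * z^+0) = x) /\
  (      (x*(y^+2+1) - i*(i*x*(y^+2-1))) * (2*x*y)^+2 / ((2*x*y)^+3 * z^+0) = y) /\
  (      2 * z * (y*(x^+2+1) + y*(x^+2-1)) * (x*(y^+2+1) - i*(i*x*(y^+2-1)))
        / ((2*x*y)^+3 * z^+0) = z).
Proof.
move=> hi h2 hxyz hz.
have [[hx hy] hz0] : (x != 0 /\ y != 0) /\ z != 0.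
  by move: hxyz; rewrite !mulf_eq0 !negb_or => /andP[/andP[-> ->] ->].
have e2 : (i*x*(y^+2-1))^+2 = - (x*(y^+2-1))^+2.
  by rewrite -mulrA exprMn hi mulN1r.
have e3 : x*(y^+2+1) - i*(i*x*(y^+2-1)) = 2*x*y^+2.
  have -> : i*(i*x*(y^+2-1)) = i^+2 * (x*(y^+2-1)) by ring.
  rewrite hi; ring.
have h8 : (8:K) != 0.
  have -> : (8:K) = 2^+3 by rewrite -natrX.
  by rewrite expf_neq0.
split; [|split; [|split; [|split; [|split; [|split]]]]].
- rewrite e2; ring.
- ring.
- rewrite e2 hz; ring.
- by rewrite !mulf_neq0.
- field; by rewrite ?hx ?hy ?h8 ?hz0.
- rewrite e3; field; by rewrite ?hx ?hy ?h8 ?hz0.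
- rewrite e3; field; by rewrite ?hx ?hy ?h8 ?hz0.
Qed.

Lemma alg2 (K : fieldType) (i a0 a1 a2 a3 a4 a5 x y z : K) :
  i^+2 = -1 -> (2:K) != 0 ->
  a1^+2 - a2^+2 = a3^+2 -> a0^+2 - a1^+2 = a4^+2 -> a0^+2 - a2^+2 = a5^+2 ->
  a1 * a5 != 0 ->
  x = (a0 + a4) * a1^+2 / (a1^+3 * a5^+0) ->
  y = (a3 - i * a2) * a1^+2 / (a1^+3 * a5^+0) ->
  z = 2 * a5 * (a0 + a4) * (a3 - i * a2) / (a1^+3 * a5^+0) ->
  (forall c : K, c != 0 ->
     (c*a0 + c*a4) * (c*a1)^+2 / ((c*a1)^+3 * (c*a5)^+0) = x /\
     (c*a3 - i * (c*a2)) * (c*a1)^+2 / ((c*a1)^+3 * (c*a5)^+0) = y /\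
     2 * (c*a5) * (c*a0 + c*a4) * (c*a3 - i * (c*a2)) / ((c*a1)^+3 * (c*a5)^+0) = z) /\
  (z^+2 = (x^+2*y^+2+1)*(x^+2+y^+2) /\ x*y*z != 0) /\
  (2*x*y/a1 != 0 /\
   y*(x^+2+1) = 2*x*y/a1*a0 /\ 2*x*y = 2*x*y/a1*a1 /\ i*x*(y^+2-1) = 2*x*y/a1*a2 /\
   x*(y^+2+1) = 2*x*y/a1*a3 /\ y*(x^+2-1) = 2*x*y/a1*a4 /\ z = 2*x*y/a1*a5).
Proof.
move=> hi h2 h1' h2' h3' h15 -> -> ->.
have [ha1 ha5] : a1 != 0 /\ a5 != 0.
  by move: h15; rewrite mulf_eq0 negb_or => /andP[-> ->].
have fA : (a0 + a4) * (a0 - a4) = a1^+2.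
  transitivity (a0^+2 - a4^+2); first ring.
  rewrite -h2'; ring.
have fB : (a3 - i*a2) * (a3 + i*a2) = a1^+2.
  transitivity (a3^+2 - i^+2 * a2^+2); first ring.
  rewrite hi -h1'; ring.
have ha12 : a1^+2 != 0 by rewrite expf_neq0.
have hA : a0 + a4 != 0.
  by apply: contraNneq ha12 => e; rewrite -fA e mul0r.
have hB : a3 - i*a2 != 0.
  by apply: contraNneq ha12 => e; rewrite -fB e mul0r.
have h4 : (4:K) != 0.
  have -> : (4:K) = 2^+2 by rewrite -natrX.
  by rewrite expf_neq0.
split.
  move=> c hc. split; [|split]; field; by rewrite ?hc ?ha1 ?ha5.
rewrite expr0 !mulr1.
set A := a0 + a4. set B := a3 - i * a2.
have hA1 : A != 0 := hA. have hB1 : B != 0 := hB.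
have fA' : a1^+2 / A = a0 - a4 by rewrite -fA mulrAC divff // mul1r.
have fB' : a1^+2 / B = a3 + i * a2 by rewrite -fB mulrAC divff // mul1r.
have e0 : a0 = (A + a1^+2/A)/2 by rewrite fA' /A; field; by rewrite ?h2 ?h4.
have e4 : a4 = (A - a1^+2/A)/2 by rewrite fA' /A; field; by rewrite ?h2 ?h4.
have e3 : a3 = (B + a1^+2/B)/2 by rewrite fB' /B; field; by rewrite ?h2 ?h4.
have e2 : a2 = i * (B - a1^+2/B)/2.
  rewrite fB' /B.
  transitivity (- i^+2 * a2); first by rewrite hi opprK mul1r.
  field; by rewrite ?h2 ?h4.
have e5 : a5^+2 = ((A + a1^+2/A)^+2 + (B - a1^+2/B)^+2)/4.
  rewrite -h3' {1}e0 {1}e2.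
  have -> : (i * (B - a1 ^+ 2 / B) / 2) ^+ 2 = i^+2 * ((B - a1 ^+ 2 / B) / 2) ^+ 2.
    by rewrite -exprMn mulrA.
  rewrite hi; field; by rewrite ?hA1 ?hB1 ?h2 ?h4.
clearbody A B.
have e5' : (2 * a5 * A * B / a1 ^+ 3) ^+ 2 = 4 * a5^+2 * (A * B / a1^+3)^+2.
  field; by rewrite ?ha1.
split.
- split.
  + rewrite e5' e5; field; by rewrite ?hA1 ?hB1 ?ha1 ?h4.
  + by rewrite !mulf_neq0 ?invr_neq0 ?expf_neq0.
- rewrite e0 e4 e3 e2.
  split; [|split; [|split; [|split; [|split; [|split]]]]].
  + by rewrite !mulf_neq0 ?invr_neq0 ?expf_neq0.
  all: field; by rewrite ?hA1 ?hB1 ?ha1 ?h2 ?h4.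
Qed.

From Stdlib Require Import FunctionalExtensionality.

Theorem lemma4p3 (p : nat) (hp : prime p) (hp4 : (p %% 4 = 1)%N) :
  exists (P : 'I_6 -> {mpoly int[3]}) (Q : 'I_3 -> {mpoly int[6]}) (a b : nat),
  forall (K : fieldType), p \in [pchar K] ->
    (forall w : 'I_3 -> K, onXD1 w ->
        onSD (psiMap P w) /\ phiMap Q a b (psiMap P w) = w) /\
    (forall v : 'I_6 -> K, onSD v ->
        [/\ onXD1 (phiMap Q a b v),
            (forall c : K, c != 0 -> phiMap Q a b (scalev c v) = phiMap Q a b v)
          & exists2 c : K, c != 0 & psiMap P (phiMap Q a b v) = scalev c v]).
Proof.
have [k hk] : exists k, p = (4 * k + 1)%N.
  by exists (p %/ 4)%N; rewrite {1}(divn_eq p 4) hp4 mulnC.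
exists (Pm k), (Qm k), 3%N, 0%N => K hc.
have hc' : (4 * k + 1)%N \in [pchar K] by rewrite -hk.
have hi : ((ii k)%:~R : K)^+2 = -1.
  have -> : ((ii k)%:~R : K) = ((2 * k)%N`!)%:R by [].
  exact: (@sqrtm1 K k hc').
have h2 : (2:K) != 0.
  apply/negP; rewrite -(dvdn_pcharf hc 2) => /dvdn_leq; move=> /(_ isT) hle.
  move: hp; rewrite hk; have -> : (4 * k + 1 = 1)%N by lia. by [].
split.
- move=> w /andP[/eqP hw hxyz].
  have [s1 [s2 [s3 [s4 [s5 [s6 s7]]]]]] := @alg1 K _ _ _ _ hi h2 hxyz hw.
  split.
  + rewrite /onSD /psiMap /Pm !inordK //=; evs.
    by rewrite s1 s2 s3 !eqxx s4.
  + apply: functional_extensionality => j.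
    rewrite -(inord_val j); case: j => [[|[|[|m]]] hm] //=;
    rewrite /phiMap /Qm inordK //=; evs; rewrite /psiMap /Pm !inordK //=; evs.
    * exact: s5.
    * exact: s6.
    * exact: s7.
- move=> v /and4P[/eqP h1 /eqP h2' /eqP h3 h15].
  have := @alg2 K _ _ _ _ _ _ _ _ _ _ hi h2 h1 h2' h3 h15 (erefl _) (erefl _) (erefl _).
  move=> -[Hsc [[Heq Hnz] [Hc [c0 [c1 [c2 [c3 [c4 c5]]]]]]]].
  split.
  + rewrite /onXD1 /phiMap /Qm !inordK //=; evs.
    by rewrite Heq eqxx Hnz.
  + move=> c hc0; have [t0 [t1 t2]] := Hsc c hc0.
    apply: functional_extensionality => j.
    rewrite -(inord_val j); case: j => [[|[|[|m]]] hm] //=;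
    rewrite /phiMap /Qm /scalev !inordK //=; evs.
    * exact: t0.
    * exact: t1.
    * exact: t2.
  + eexists; first exact: Hc.
    apply: functional_extensionality => j.
    rewrite -(inord_val j); case: j => [[|[|[|[|[|[|m]]]]]] hm] //=;
    rewrite /psiMap /Pm /scalev !inordK //=; evs; rewrite /phiMap /Qm !inordK //=; evs.
    * exact: c0.
    * exact: c1.
    * exact: c2.
    * exact: c3.
    * exact: c4.
    * exact: c5.
Qed.
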